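(* For every extended directed co-graph $G=(V,E)$ which is given by a binary ex-di-co-tree, the directed path-width $\mathrm{dpw}(G)$ and the directed tree-width $\mathrm{dtw}(G)$ can be computed in time $O(|V|)$.
   Context: Digraphs are finite, without loops or multiple arcs. For vertex-disjoint digraphs $G_1,\ldots,G_k$: the series composition $\otimes$ is their disjoint union plus all arcs in both directions between vertices of different $G_i$; a directed union $\ominus$ is any digraph obtained from their disjoint union by adding some (possibly none or all) arcs from vertices of $G_i$ to vertices of $G_j$ with $i<j$. Extended directed co-graphs: single-vertex digraphs, and closure under directed union and series composition. An ex-di-co-tree for $G$ is a rooted tree whose leaves correspond to the vertices of $G$ and whose inner nodes correspond to directed union or series composition operations applied to the digraphs defined by the child subtrees (in order), so that the root yields $G$; it is binary if every inner node has exactly two children. Directed path-width: a directed path-decomposition of $G=(V,E)$ is a sequence $(X_1,\ldots,X_r)$ of subsets of $V$ with $\bigcup X_i=V$, for each arc $(u,v)$ some $i\le j$ with $u\in X_i,v\in X_j$, and for each vertex the bags containing it having consecutive indices; width $\max|X_i|-1$; $\mathrm{dpw}(G)$ is the minimum width. Directed tree-width: for $Z\subseteq V$, $S\subseteq V$ is $Z$-normal if no directed walk in $G-Z$ with first and last vertex in $S$ uses a vertex of $G-(Z\cup S)$. A directed tree-decomposition is $(T,\mathcal{X},\mathcal{W})$ with $T=(V_T,E_T)$ an out-tree (rooted, arcs directed away from root; $u\le v$ means a directed path of $\ge0$ arcs from $u$ to $v$), $\mathcal{X}=\{X_e:e\in E_T\}$, $\mathcal{W}=\{W_r:r\in V_T\}$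 subsets of $V$, such that $\mathcal{W}$ partitions $V$ into nonempty sets and for each $(u,v)\in E_T$ the set $\bigcup\{W_r: v\le r\}$ is $X_{(u,v)}$-normal; width $\max_r|W_r\cup\bigcup_{e\sim r}X_e|-1$ ($e\sim r$: $r$ is an end of $e$); $\mathrm{dtw}(G)$ is the minimum width. *)

(* Defs.v *)
From mathcomp Require Import all_boot.
Set Implicit Arguments. Unset Strict Implicit. Unset Printing Implicit Defensive.

(* Binary ex-di-co-trees: leaves labelled by vertices, inner nodes are
   binary directed unions or binary series compositions (children ordered). *)
Inductive cotree (V : Type) : Type :=
| CLeaf of V
| CUnion of cotree V & cotree V
| CSeries of cotree V & cotree V.
Arguments CLeaf {V}. Arguments CUnion {V}. Arguments CSeries {V}.

Fixpoint leaves (V : Type) (t : cotree V) : seq V :=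
  match t with
  | CLeaf v => [:: v]
  | CUnion l r => leaves l ++ leaves r
  | CSeries l r => leaves l ++ leaves r
  end.

(* [yields E t]: the digraph E induced on the leaves of t is the one obtained
   by evaluating t: a leaf is a single vertex (no loop); a directed union
   G1 (-) G2 keeps G1, G2 and allows arbitrary arcs from G1 to G2 but none
   from G2 to G1; a series composition adds all arcs in both directions. *)
Fixpoint yields (V : eqType) (E : rel V) (t : cotree V) : bool :=
  match t with
  | CLeaf v => ~~ E v v
  | CUnion l r =>
      [&& yields E l, yields E r &
          all (fun u => all (fun v => ~~ E v u) (leaves r)) (leaves l)]
  | CSeries l r =>
      [&& yields E l, yields E r &
          all (fun u => all (fun v => E u v && E v u) (leaves r)) (leaves l)]
  end.

Definition is_bin_exdicotree (V : finType) (E : rel V) (t : cotree V) : Prop :=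
  [/\ uniq (leaves t), (forall v : V, v \in leaves t) & yields E t].

Definition is_dpath_dec (V : finType) (E : rel V) (s : seq {set V}) : Prop :=
  [/\ (forall v : V, exists2 i, i < size s & v \in nth set0 s i),
      (forall u v : V, E u v -> exists i j, [/\ i <= j, j < size s,
                                   u \in nth set0 s i & v \in nth set0 s j]) &
      (forall (v : V) i j k, i <= j -> j <= k -> k < size s ->
          v \in nth set0 s i -> v \in nth set0 s k -> v \in nth set0 s j)].

Definition dpd_width (V : finType) (s : seq {set V}) : nat :=
  (\max_(X <- s) #|X|) - 1.

Definition is_dpw (V : finType) (E : rel V) (k : nat) : Prop :=
  (exists s, is_dpath_dec E s /\ dpd_width s = k) /\
  (forall s, is_dpath_dec E s -> k <= dpd_width s).

Definition Z_normal (V : finType) (E : rel V) (Z : {set V}) (S : V -> Prop)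
  : Prop :=
  forall (x : V) (p : seq V),
    path E x p -> all (fun y => y \notin Z) (x :: p) ->
    S x -> S (last x p) ->
    forall y, y \in x :: p -> y \in Z \/ S y.

(* Out-trees on a finite node type R, given by a parent map; arcs are
   (u, v) with par v = Some u, directed away from the root. *)
Definition iter_par (R : Type) (par : R -> option R) (n : nat) (v : R)
  : option R := iter n (fun o => obind par o) (Some v).

Definition out_tree (R : finType) (par : R -> option R) (root : R) : Prop :=
  par root = None /\ forall v : R, exists n, iter_par par n v = Some root.

Definition tle (R : Type) (par : R -> option R) (u v : R) : Prop :=
  exists n, iter_par par n v = Some u.

(* Directed tree-decomposition (T, X, W): the arc (u, v) of T is indexed by
   its head v (which has parent u), so X_(u,v) = X v. *)
Definition is_dtree_dec (V : finType) (E : rel V) (R : finType)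
  (par : R -> option R) (root : R) (X W : R -> {set V}) : Prop :=
  [/\ out_tree par root,
      (forall r, W r != set0),
      (forall r1 r2, r1 != r2 -> [disjoint W r1 & W r2]),
      (forall x : V, exists r, x \in W r) &
      (forall u v, par v = Some u ->
         Z_normal E (X v) (fun x => exists2 r, tle par v r & x \in W r))].

Definition dtd_bag (V R : finType) (par : R -> option R) (X W : R -> {set V})
  (r : R) : {set V} :=
  W r :|: (if par r is Some _ then X r else set0)
      :|: \bigcup_(c | par c == Some r) X c.

Definition dtd_width (V R : finType) (par : R -> option R)
  (X W : R -> {set V}) : nat :=
  (\max_(r : R) #|dtd_bag par X W r|) - 1.

Definition is_dtw (V : finType) (E : rel V) (k : nat) : Prop :=
  (exists (R : finType) (par : R -> option R) (root : R) (X W : R -> {set V}),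
      is_dtree_dec E par root X W /\ dtd_width par X W = k) /\
  (forall (R : finType) (par : R -> option R) (root : R) (X W : R -> {set V}),
      is_dtree_dec E par root X W -> k <= dtd_width par X W).

(* Cost model: bottom-up tree programs (unit-cost arithmetic).         *)
(* A program keeps a state of pk natural numbers per tree node.  A leaf *)
(* gets constant state; an inner node's state is computed from its two *)
(* children's states by fixed arithmetic expressions; the answers are *)
(* read off the root state by fixed expressions.  Each evaluated       *)
(* expression node costs one step.                                    *)

Inductive aexp (n : nat) : Type :=
| AVar of 'I_n
| AConst of nat
| AAdd of aexp n & aexp n
| ASub of aexp n & aexp n
| AMul of aexp n & aexp n
| AMin of aexp n & aexp n
| AMax of aexp n & aexp n.

Fixpoint aeval (n : nat) (env : 'I_n -> nat) (e : aexp n) : nat :=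
  match e with
  | AVar i => env i
  | AConst c => c
  | AAdd a b => aeval env a + aeval env b
  | ASub a b => aeval env a - aeval env b
  | AMul a b => aeval env a * aeval env b
  | AMin a b => minn (aeval env a) (aeval env b)
  | AMax a b => maxn (aeval env a) (aeval env b)
  end.

Fixpoint asize (n : nat) (e : aexp n) : nat :=
  match e with
  | AVar _ | AConst _ => 1
  | AAdd a b | ASub a b | AMul a b | AMin a b | AMax a b =>
      (asize a + asize b).+1
  end.

Record tprog := TProg {
  pk : nat;
  pleaf : 'I_pk -> nat;
  punion : 'I_pk -> aexp (pk + pk);
  pseries : 'I_pk -> aexp (pk + pk);
  pout_pw : aexp pk;
  pout_tw : aexp pk }.
Arguments pleaf : clear implicits. Arguments punion : clear implicits.
Arguments pseries : clear implicits. Arguments pout_pw : clear implicits.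
Arguments pout_tw : clear implicits.

Definition pair_env (k : nat) (f g : 'I_k -> nat) : 'I_(k + k) -> nat :=
  fun i => match split i with inl a => f a | inr b => g b end.

Fixpoint run_state (P : tprog) (V : Type) (t : cotree V) : 'I_(pk P) -> nat :=
  match t with
  | CLeaf _ => pleaf P
  | CUnion l r => fun i =>
      aeval (pair_env (@run_state P V l) (@run_state P V r)) (punion P i)
  | CSeries l r => fun i =>
      aeval (pair_env (@run_state P V l) (@run_state P V r)) (pseries P i)
  end.
Arguments run_state P {V} t.

Fixpoint state_cost (P : tprog) (V : Type) (t : cotree V) : nat :=
  match t with
  | CLeaf _ => pk P
  | CUnion l r => @state_cost P V l + @state_cost P V r +
                  \sum_(i < pk P) asize (punion P i)
  | CSeries l r => @state_cost P V l + @state_cost P V r +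
                   \sum_(i < pk P) asize (pseries P i)
  end.
Arguments state_cost P {V} t.

Definition run_pw (P : tprog) (V : Type) (t : cotree V) : nat :=
  aeval (run_state P t) (pout_pw P).
Definition run_tw (P : tprog) (V : Type) (t : cotree V) : nat :=
  aeval (run_state P t) (pout_tw P).
Definition run_cost (P : tprog) (V : Type) (t : cotree V) : nat :=
  state_cost P t + asize (pout_pw P) + asize (pout_tw P).

(* Main.v *)
Require Import Defs.
From mathcomp Require Import all_boot zify.
Set Implicit Arguments. Unset Strict Implicit. Unset Printing Implicit Defensive.

Definition nv (V : Type) (t : cotree V) := size (leaves t).
Fixpoint wt (V : Type) (t : cotree V) : nat :=
  match t with
  | CLeaf _ => 0
  | CUnion l r => maxn (wt l) (wt r)
  | CSeries l r => minn (wt l + nv r) (wt r + nv l)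
  end.

Definition o0 : 'I_2 := @Ordinal 2 0 isT.
Definition o1 : 'I_2 := @Ordinal 2 1 isT.
Definition L0 : 'I_(2+2) := @Ordinal 4 0 isT.
Definition L1 : 'I_(2+2) := @Ordinal 4 1 isT.
Definition R0 : 'I_(2+2) := @Ordinal 4 2 isT.
Definition R1 : 'I_(2+2) := @Ordinal 4 3 isT.

Definition Pleaf (i : 'I_2) : nat := if val i == 0 then 1 else 0.
Definition Punion (i : 'I_2) : aexp (2 + 2) :=
  if val i == 0 then AAdd (AVar L0) (AVar R0) else AMax (AVar L1) (AVar R1).
Definition Pseries (i : 'I_2) : aexp (2 + 2) :=
  if val i == 0 then AAdd (AVar L0) (AVar R0)
  else AMin (AAdd (AVar L1) (AVar R0)) (AAdd (AVar R1) (AVar L0)).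

Definition P : tprog := @TProg 2 Pleaf Punion Pseries (AVar o1) (AVar o1).

Lemma pe_L0 (f g : 'I_2 -> nat) : pair_env f g L0 = f o0.
Proof. rewrite /pair_env; case: splitP => // [[[|[|]]]] //= Hj _.
  by congr f; apply: val_inj. Qed.


Lemma pe (f g : 'I_2 -> nat) :
  [/\ pair_env f g L0 = f o0, pair_env f g L1 = f o1,
      pair_env f g R0 = g o0 & pair_env f g R1 = g o1].
Proof.
split; rewrite /pair_env; case: splitP => j /= Hj;
 (try by (congr (_ _); apply: val_inj => /=; lia));
 exfalso; have := ltn_ord j; lia.
Qed.


Lemma run_stateE (V : Type) (t : cotree V) :
  run_state P t o0 = nv t /\ run_state P t o1 = wt t.
Proof.
elim: t => [v|l [IHl0 IHl1] r [IHr0 IHr1]|l [IHl0 IHl1] r [IHr0 IHr1]] //=;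
  have [-> -> -> ->] := pe (run_state P l) (run_state P r);
  by rewrite IHl0 IHl1 IHr0 IHr1 /nv /= size_cat.
Qed.

Lemma cost_bound (V : Type) (t : cotree V) : state_cost P t + 10 <= 12 * nv t.
Proof.
elim: t => [v|l IHl r IHr|l IHl r IHr] //=; rewrite /nv /= size_cat mulnDr;
 rewrite !big_ord_recr big_ord0 /=; rewrite -/(nv l) -/(nv r); lia.
Qed.


Lemma path_stay (V : eqType) (E : rel V) (Pr : V -> Prop) (Zp : pred V) x p :
  path E x p -> all (fun z => ~~ Zp z) (x :: p) -> Pr x ->
  (forall a c, E a c -> Pr a -> ~~ Zp c -> Pr c) ->
  forall y, y \in x :: p -> Pr y.
Proof.
move=> Hp Ha Hx Hst; elim: p x Hp Ha Hx => [|z p IH] x /=.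
  by move=> _ _ Hx y; rewrite inE => /eqP ->.
move=> /andP [Exz Hp] /andP [_ Ha] Hx y; rewrite inE => /orP [/eqP -> //|].
apply: IH => //; case/andP: Ha => Hz _; exact: (Hst x z Exz Hx Hz).
Qed.

Definition haven (V : finType) (E : rel V) (A : {set V}) (k : nat)
  (b : {set V} -> {set V}) : Prop :=
  forall Z : {set V}, #|Z :&: A| < k ->
  [/\ b Z != set0, b Z \subset A :\: Z,
   (forall x y, x \in b Z -> y \in b Z -> exists p,
       [/\ path E x p, last x p = y & all (fun z => z \notin Z) (x :: p)]) &
   (forall Z' : {set V}, Z \subset Z' -> #|Z' :&: A| < k -> b Z' \subset b Z)].

Lemma cardIA (V : finType) (Z A : {set V}) : #|Z :&: A| <= #|Z|.
Proof. by apply: subset_leq_card; apply: subsetIl. Qed.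

Lemma haven_mono (V : finType) (E : rel V) (A A' : {set V}) k k' b :
  A \subset A' -> k' <= k -> haven E A k b -> haven E A' k' b.
Proof.
move=> sA lk H Z HZ.
have cZ : forall Z : {set V}, #|Z :&: A'| < k' -> #|Z :&: A| < k.
  move=> Z0 h; apply: leq_ltn_trans (_ : #|Z0 :&: A'| < k) ; last by apply: leq_trans lk.
  by apply: subset_leq_card; apply: setIS.
have [h1 h2 h3 h4] := H Z (cZ Z HZ); split => //.
  by apply: subset_trans h2 _; apply: setSD.
by move=> Z' s h; apply: h4 => //; apply: cZ.
Qed.

Lemma haven_leaf (V : finType) (E : rel V) (v : V) :
  haven E [set v] 1 (fun _ => [set v]).
Proof.
move=> Z HZ.
have vZ : v \notin Z.
  apply/negP => vz; move: HZ; rewrite ltnS leqn0 cards_eq0 => /eqP/setP/(_ v).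
  by rewrite !inE vz eqxx.
split => //.
- by apply/set0Pn; exists v; rewrite inE.
- by apply/subsetP => y; rewrite !inE => /eqP ->; rewrite vZ eqxx.
- move=> x y; rewrite !inE => /eqP -> /eqP ->; exists [::]; split => //=.
  by rewrite vZ.
Qed.

Lemma card_split (V : finType) (Z A1 A2 : {set V}) : [disjoint A1 & A2] ->
  #|Z :&: (A1 :|: A2)| = #|Z :&: A1| + #|Z :&: A2|.
Proof.
move=> dis; rewrite setIUr cardsU.
suff -> : Z :&: A1 :&: (Z :&: A2) = set0 by rewrite cards0 subn0.
apply/setP => x; rewrite !inE; apply/negP => /andP [/andP [_ h1] /andP [_ h2]].
by rewrite (disjointFr dis h1) in h2.
Qed.

Lemma haven_series (V : finType) (E : rel V) (A1 A2 : {set V}) k1 k2 b1 b2 :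
 [disjoint A1 & A2] ->
 (forall u v, u \in A1 -> v \in A2 -> E u v && E v u) ->
 k1 <= #|A1| -> k2 <= #|A2| ->
 haven E A1 k1 b1 -> haven E A2 k2 b2 ->
 haven E (A1 :|: A2) (minn (k1 + #|A2|) (k2 + #|A1|))
   (fun Z => if A2 \subset Z then b1 Z else if A1 \subset Z then b2 Z
             else (A1 :|: A2) :\: Z).
Proof.
move=> dis arc k1A k2A H1 H2.
set k := minn _ _.
have cs := fun Z => card_split Z dis.
have c2 : forall Z : {set V}, A2 \subset Z -> #|Z :&: A2| = #|A2|
  by move=> Z /setIidPr ->.
have c1 : forall Z : {set V}, A1 \subset Z -> #|Z :&: A1| = #|A1|
  by move=> Z /setIidPr ->.
have small1 : forall Z : {set V}, A2 \subset Z -> #|Z :&: (A1 :|: A2)| < k ->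
    #|Z :&: A1| < k1.
  by move=> Z h; rewrite cs c2 // /k; lia.
have small2 : forall Z : {set V}, A1 \subset Z -> #|Z :&: (A1 :|: A2)| < k ->
    #|Z :&: A2| < k2.
  by move=> Z h; rewrite cs c1 // /k; lia.
have notboth : forall Z : {set V}, A1 \subset Z -> A2 \subset Z ->
    #|Z :&: (A1 :|: A2)| < k -> False.
  by move=> Z h1 h2; rewrite cs c1 // c2 // /k; lia.
have sub : forall Z : {set V}, #|Z :&: (A1 :|: A2)| < k ->
  (if A2 \subset Z then b1 Z else if A1 \subset Z then b2 Z
             else (A1 :|: A2) :\: Z) \subset (A1 :|: A2) :\: Z.
  move=> Z hZ; case: ifP => h2.
    have [_ s _ _] := H1 Z (small1 Z h2 hZ).
    by apply: subset_trans s _; apply: setSD; apply: subsetUl.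
  case: ifP => h1 //.
  have [_ s _ _] := H2 Z (small2 Z h1 hZ).
  by apply: subset_trans s _; apply: setSD; apply: subsetUr.
move=> Z hZ; split.
- case: ifP => h2; first by case: (H1 Z (small1 Z h2 hZ)).
  case: ifP => h1; first by case: (H2 Z (small2 Z h1 hZ)).
  move/negbT: h1 => /subsetPn [a a1 aZ]; apply/set0Pn; exists a.
  by rewrite !inE a1 aZ.
- exact: sub Z hZ.
- case: ifP => h2; first by case: (H1 Z (small1 Z h2 hZ)).
  case: ifP => h1; first by case: (H2 Z (small2 Z h1 hZ)).
  move/negbT: h1 => /subsetPn [a1 a1in a1Z].
  move/negbT: h2 => /subsetPn [a2 a2in a2Z].
  move=> x y; rewrite !inE => /andP [xZ xA] /andP [yZ yA].
  case/orP: xA => xA; case/orP: yA => yA.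
  + case/andP: (arc x a2 xA a2in) => e1 _; case/andP: (arc y a2 yA a2in) => _ e2.
    by exists [:: a2; y]; split => //=; rewrite ?e1 ?e2 ?xZ ?yZ ?a2Z.
  + case/andP: (arc x y xA yA) => e1 _.
    by exists [:: y]; split => //=; rewrite ?e1 ?xZ ?yZ.
  + case/andP: (arc y x yA xA) => _ e1.
    by exists [:: y]; split => //=; rewrite ?e1 ?xZ ?yZ.
  + case/andP: (arc a1 x a1in xA) => _ e1; case/andP: (arc a1 y a1in yA) => e2 _.
    by exists [:: a1; y]; split => //=; rewrite ?e1 ?e2 ?xZ ?yZ ?a1Z.
- move=> Z' sZ hZ'.
  case h2: (A2 \subset Z).
    have h2' := subset_trans h2 sZ; rewrite h2'.
    by case: (H1 Z (small1 Z h2 hZ)) => _ _ _; apply => //; apply: small1.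
  case h1: (A1 \subset Z).
    have h1' := subset_trans h1 sZ.
    case h2': (A2 \subset Z'); first by case: (notboth Z' h1' h2' hZ').
    rewrite h1'.
    by case: (H2 Z (small2 Z h1 hZ)) => _ _ _; apply => //; apply: small2.
  by apply: subset_trans (sub Z' hZ') _; apply: setDS.
Qed.

Lemma wt_lt (V : Type) (t : cotree V) : wt t < nv t.
Proof.
elim: t => [v|l IHl r IHr|l IHl r IHr] //=; rewrite /nv /= size_cat -/(nv l) -/(nv r); lia.
Qed.

Lemma setcat (V : finType) (s1 s2 : seq V) :
  [set x in s1 ++ s2] = [set x in s1] :|: [set x in s2].
Proof. by apply/setP => x; rewrite !inE mem_cat. Qed.

Lemma card_leaves (V : finType) (t : cotree V) :
  uniq (leaves t) -> #|[set x in leaves t]| = nv t.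
Proof. by move=> u; rewrite cardsE; apply/card_uniqP. Qed.

Lemma disj_cat (V : finType) (s1 s2 : seq V) :
  uniq (s1 ++ s2) -> [disjoint [set x in s1] & [set x in s2]].
Proof.
rewrite cat_uniq => /and3P [_ h _]; rewrite -setI_eq0; apply/eqP/setP => x.
rewrite !inE; apply/negP => /andP [x1 x2]; move/negP: h; apply; apply/hasP.
by exists x.
Qed.

Lemma haven_tree (V : finType) (E : rel V) (t : cotree V) :
  uniq (leaves t) -> yields E t ->
  exists b, haven E [set x in leaves t] (wt t).+1 b.
Proof.
elim: t => [v|l IHl r IHr|l IHl r IHr] /=.
- move=> _ _; exists (fun _ => [set v]).
  have -> : [set x in [:: v]] = [set v] by apply/setP => x; rewrite !inE.
  exact: haven_leaf.
- rewrite cat_uniq => /and3P [ul _ ur] /and3P [yl yr _].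
  have [b1 H1] := IHl ul yl; have [b2 H2] := IHr ur yr.
  rewrite setcat; case: (leqP (wt l) (wt r)) => c.
    exists b2; apply: haven_mono H2; first exact: subsetUr.
    by rewrite ltnS; lia.
  exists b1; apply: haven_mono H1; first exact: subsetUl.
  by rewrite ltnS; lia.
- move=> u; move: (u); rewrite cat_uniq => /and3P [ul _ ur] /and3P [yl yr ya].
  have [b1 H1] := IHl ul yl; have [b2 H2] := IHr ur yr.
  eexists; rewrite setcat.
  have -> : (minn (wt l + nv r) (wt r + nv l)).+1 =
     minn ((wt l).+1 + #|[set x in leaves r]|) ((wt r).+1 + #|[set x in leaves l]|)
    by rewrite !card_leaves //; lia.
  apply: haven_series H1 H2.
  + exact: disj_cat.
  + move=> x y; rewrite !inE => xl yr'.
    by move/allP: ya => /(_ x xl) /allP /(_ y yr').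
  + by rewrite card_leaves //; apply: wt_lt.
  + by rewrite card_leaves //; apply: wt_lt.
Qed.


Lemma dpd_lb (V : finType) (E : rel V) (s : seq {set V}) (A : {set V}) k b :
  is_dpath_dec E s -> haven E A k b -> 0 < k ->
  exists2 i, i < size s & k <= #|nth set0 s i|.
Proof.
move=> [Hcov Harc Hconv] H k0.
case: (boolP [exists i : 'I_(size s), k <= #|nth set0 s i|]) =>
  [/existsP [i Hi]|/existsPn Hsm]; first by exists i.
have small : forall i, #|nth set0 s i| < k.
  move=> i; case: (ltnP i (size s)) => hi.
    by have := Hsm (Ordinal hi); rewrite ltnNge.
  by rewrite nth_default // cards0.
have sA : forall i (Z : {set V}), Z \subset nth set0 s i -> #|Z :&: A| < k.
  move=> i Z h; apply: leq_ltn_trans (small i); apply: leq_trans (cardIA Z A) _.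
  exact: subset_leq_card.
have claim : forall i x, x \in b (nth set0 s i.-1 :&: nth set0 s i) ->
    forall j, j < i -> x \notin nth set0 s j.
  elim=> [|i IH] //=.
  move=> y Hy.
  have HZi := sA i (nth set0 s i) (subxx _).
  have [ne1 sub1 _ mono1] := H _ HZi.
  have [x Hx] := set0Pn _ ne1.
  set Z := nth set0 s i :&: nth set0 s i.+1.
  have HZ : #|Z :&: A| < k := sA i Z (subsetIl _ _).
  have [_ subZ walk monoZ] := H Z HZ.
  have HZ0 : #|(nth set0 s i.-1 :&: nth set0 s i) :&: A| < k := sA i _ (subsetIr _ _).
  have Sx : forall j, j < i -> x \notin nth set0 s j.
    apply: IH; have [_ _ _ m0] := H _ HZ0.
    exact: (subsetP (m0 _ (subsetIr _ _) HZi)) _ Hx.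
  have xni : x \notin nth set0 s i.
    by have := subsetP sub1 x Hx; rewrite !inE => /andP [].
  have Sx' : forall j, j < i.+1 -> x \notin nth set0 s j.
    move=> j; rewrite ltnS leq_eqVlt => /orP [/eqP -> //|]; exact: Sx.
  have xZ : x \in b Z := subsetP (monoZ _ (subsetIl _ _) HZi) x Hx.
  have [p [pp pl pa]] := walk x y xZ Hy.
  have := @path_stay V E (fun a => forall j, j < i.+1 -> a \notin nth set0 s j)
    (fun z => z \in Z) x p pp pa Sx'.
  move=> /(_ _ y); rewrite -pl; apply; last exact: mem_last.
  move=> a c Eac Sa cZ j hj; apply/negP => cj.
  have [i' [j' [hij hj' ai' cj']]] := Harc a c Eac.
  have hi' : i.+1 <= i'.
    rewrite leqNgt; apply/negP => h; by move/negP: (Sa i' h).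
  have ci : c \in nth set0 s i.
    apply: (Hconv c j i j' _ _ hj' cj cj'); first by rewrite -ltnS.
    exact: leq_trans (leqnSn i) (leq_trans hi' hij).
  have ci1 : c \in nth set0 s i.+1.
    apply: (Hconv c j i.+1 j' _ _ hj' cj cj'); first exact: ltnW.
    exact: leq_trans hi' hij.
  by move/negP: cZ; apply; rewrite !inE ci ci1.
have [ne _ _ _] := H set0 ltac:(by rewrite set0I cards0).
have [x Hx] := set0Pn _ ne.
have := claim (size s) x; rewrite (nth_default _ (leqnn _)) setI0 => /(_ Hx) Sx.
have [i hi xi] := Hcov x.
by move: (Sx i hi); rewrite xi.
Qed.

Lemma iter_none (R : Type) (par : R -> option R) q :
  iter q (fun o => obind par o) None = None.
Proof. by elim: q => //= q ->. Qed.

Lemma dtd_lb (V : finType) (E : rel V) (R : finType) (par : R -> option R)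
  (root : R) (X W : R -> {set V}) (A : {set V}) k b :
  is_dtree_dec E par root X W -> haven E A k b -> 0 < k ->
  exists r, k <= #|dtd_bag par X W r|.
Proof.
move=> [[proot Hroot] Wne Wdis Wcov Hnorm] H k0.
case: (boolP [exists r, k <= #|dtd_bag par X W r|]) =>
  [/existsP [r Hr]|/existsPn Hsm]; first by exists r.
have small : forall r, #|dtd_bag par X W r| < k by move=> r; rewrite ltnNge Hsm.
have sA : forall r (Z : {set V}), Z \subset dtd_bag par X W r -> #|Z :&: A| < k.
  move=> r Z h; apply: leq_ltn_trans (small r); apply: leq_trans (cardIA Z A) _.
  exact: subset_leq_card.
have Hd : forall v, exists n, iter_par par n v == Some root.
  by move=> v; have [n hn] := Hroot v; exists n; apply/eqP.
pose d v := ex_minn (Hd v).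
have dP : forall v, iter_par par (d v) v = Some root.
  by move=> v; rewrite /d; case: ex_minnP => n /eqP.
have uniqd0 : forall v n m, n <= m -> iter_par par n v = Some root ->
    iter_par par m v = Some root -> n = m.
  move=> v n m nm h1; rewrite -{1}(subnK nm) /iter_par iterD.
  rewrite /iter_par in h1; rewrite h1.
  case e: (m - n) => [|q]; first by move=> _; apply/eqP; rewrite eqn_leq nm -subn_eq0 e.
  by rewrite iterSr /= proot iter_none.
have uniqd : forall v n m, iter_par par n v = Some root ->
    iter_par par m v = Some root -> n = m.
  move=> v n m h1 h2; case: (leqP n m) => nm; first exact: uniqd0 h1 h2.
  by symmetry; apply: uniqd0 (ltnW nm) h2 h1.
have dchild : forall r c, par c = Some r -> d c = (d r).+1.
  move=> r c pc; apply: uniqd (dP c) _.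
  by rewrite /iter_par iterSr /= pc; exact: dP r.
have tleD : forall r r', tle par r r' ->
    r' = r \/ exists c, par c = Some r /\ tle par c r'.
  move=> r r' [[|n]]; rewrite /iter_par /=; first by case=> ->; left.
  case e: (iter n _ (Some r')) => [c|] //= pc; right; exists c; split => //.
  by exists n; exact e.
pose Xin r := if par r is Some _ then X r else set0.
pose Inv r := forall x, x \in b (Xin r) -> exists2 r', tle par r r' & x \in W r'.
have step : forall r, Inv r -> exists c, par c = Some r /\ Inv c.
  move=> r Ir.
  set B := dtd_bag par X W r.
  have HB : #|B :&: A| < k := sA r B (subxx _).
  have [neB subB _ monoB] := H B HB.
  have [x xB] := set0Pn _ neB.
  have sXin : Xin r \subset B.
    by rewrite /B /dtd_bag; apply: subset_trans (subsetUr (W r) _) (subsetUl _ _).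
  have xin : x \in b (Xin r).
    have [_ _ _ m0] := H _ (sA r _ sXin).
    exact: subsetP (m0 B sXin HB) x xB.
  have [r' tr' xW] := Ir x xin.
  have xnB : x \notin B by have := subsetP subB x xB; rewrite !inE => /andP [].
  case: (tleD r r' tr') => [er|[c [pc tc]]].
    subst r'; exfalso; move/negP: xnB; apply; apply: (subsetP _ x xW).
    by rewrite /B /dtd_bag; apply: subset_trans (subsetUl _ _) (subsetUl _ _).
  exists c; split => //.
  rewrite /Inv /Xin pc.
  have sXc : X c \subset B.
    rewrite /B /dtd_bag; apply: subset_trans (subsetUr _ _).
    by apply: (bigcup_sup c); rewrite pc.
  have [_ subc walkc monoc] := H (X c) (sA r _ sXc).
  have xc : x \in b (X c) := subsetP (monoc B sXc HB) x xB.
  move=> y yc.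
  have [p [pp pl pa]] := walkc x y xc yc.
  have [q [qp ql qa]] := walkc y x yc xc.
  have Sx : exists2 r'', tle par c r'' & x \in W r'' by exists r'.
  have pq : path E x (p ++ q) by rewrite cat_path pp pl.
  have aa : all (fun z => z \notin X c) (x :: p ++ q).
    rewrite /= all_cat; move: pa qa => /= /andP [-> ->] /andP [_ ->] //.
  have yin : y \in x :: p ++ q.
    rewrite -pl; move: (mem_last x p); rewrite !inE mem_cat => /orP [->|->] //.
    by rewrite orbT.
  have lst : last x (p ++ q) = x by rewrite last_cat pl ql.
  have Sl : exists2 r'', tle par c r'' & last x (p ++ q) \in W r'' by rewrite lst.
  case: (Hnorm r c pc x (p ++ q) pq aa Sx Sl y yin) => // yX.
  by exfalso; have := subsetP subc y yc; rewrite !inE yX.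
have Iroot : Inv root.
  rewrite /Inv /Xin proot => x _; have [r' xr'] := Wcov x.
  by exists r' => //; have [n hn] := Hroot r'; exists n.
set N := \max_v d v.
have desc : forall m r, N - d r <= m -> Inv r -> False.
  elim=> [|m IH] r hm Ir; have [c [pc Ic]] := step r Ir;
    have dc := dchild r c pc; have dN : d c <= N := @leq_bigmax R d c.
    by move: hm; rewrite dc in dN; rewrite leqn0 subn_eq0 => /(leq_trans dN); rewrite ltnn.
  apply: (IH c) => //; rewrite dc subnS; move: hm; case: (N - d r) => //.
by case: (desc N root (leq_subr _ _) Iroot).
Qed.


Definition dpd_of (V : finType) (E : rel V) (A : {set V}) (D : seq {set V}) : Prop :=
 [/\ 0 < size D, (forall i, nth set0 D i \subset A),
   (forall v, v \in A -> exists2 i, i < size D & v \in nth set0 D i),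
   (forall u v, u \in A -> v \in A -> E u v -> exists i j,
       [/\ i <= j, j < size D, u \in nth set0 D i & v \in nth set0 D j]) &
   (forall v i j k, i <= j -> j <= k -> k < size D ->
      v \in nth set0 D i -> v \in nth set0 D k -> v \in nth set0 D j)].

Lemma dpd_leaf (V : finType) (E : rel V) (v : V) : dpd_of E [set v] [:: [set v]].
Proof.
split => //.
- by case=> [|i] /=; [exact: subxx | rewrite nth_nil sub0set].
- by move=> x xv; exists 0.
- by move=> x y xv yv _; exists 0, 0; split.
- by move=> x [|i] [|j] [|k].
Qed.

Lemma nth_mapU (V : finType) (B : {set V}) (D : seq {set V}) i : i < size D ->
  nth set0 [seq X :|: B | X <- D] i = nth set0 D i :|: B.
Proof. by move=> h; rewrite (nth_map set0). Qed.

Lemma dpd_series (V : finType) (E : rel V) (A1 A2 : {set V}) (D : seq {set V}) :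
  dpd_of E A1 D -> dpd_of E (A1 :|: A2) [seq X :|: A2 | X <- D].
Proof.
move=> [s0 sub cov arc conv].
have cov' : forall v, v \in A1 :|: A2 -> exists2 i, i < size D &
    v \in nth set0 [seq X :|: A2 | X <- D] i.
  move=> v; rewrite inE => /orP [/cov [i hi vi]|v2].
    by exists i => //; rewrite nth_mapU // inE vi.
  by exists 0 => //; rewrite nth_mapU // inE v2 orbT.
split; rewrite ?size_map //.
- move=> i; case: (ltnP i (size D)) => hi.
    by rewrite nth_mapU //; apply: setUSS.
  by rewrite nth_default ?size_map // sub0set.
- move=> u v; case/boolP: (u \in A2) => u2.
    move=> _ /cov' [j hj vj] _; exists j, j; split => //.
    by rewrite nth_mapU // inE u2 orbT.
  case/boolP: (v \in A2) => v2.
    move=> /cov' [i hi ui] _ _; exists i, i; split => //.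
    by rewrite nth_mapU // inE v2 orbT.
  rewrite !inE (negbTE u2) (negbTE v2) !orbF => u1 v1 e.
  have [i [j [hij hj ui vj]]] := arc u v u1 v1 e.
  exists i, j; split => //; rewrite nth_mapU ?inE ?ui ?vj //.
  exact: leq_ltn_trans hij hj.
- move=> v i j k hij hjk hk.
  have hj : j < size D by apply: leq_ltn_trans hjk hk.
  have hi : i < size D by apply: leq_ltn_trans hij hj.
  rewrite !nth_mapU // !inE.
  case/boolP: (v \in A2) => v2; rewrite ?orbT ?orbF //.
  exact: conv.
Qed.

Lemma dpd_union (V : finType) (E : rel V) (A1 A2 : {set V}) (D1 D2 : seq {set V}) :
  dpd_of E A1 D1 -> dpd_of E A2 D2 -> [disjoint A1 & A2] ->
  (forall u v, u \in A2 -> v \in A1 -> ~~ E u v) ->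
  dpd_of E (A1 :|: A2) (D1 ++ D2).
Proof.
move=> [s1 sub1 cov1 arc1 conv1] [s2 sub2 cov2 arc2 conv2] dis noback.
have n1 : forall i, i < size D1 -> nth set0 (D1 ++ D2) i = nth set0 D1 i.
  by move=> i hi; rewrite nth_cat hi.
have n2 : forall i, nth set0 (D1 ++ D2) (size D1 + i) = nth set0 D2 i.
  by move=> i; rewrite nth_cat ltnNge leq_addr /= addKn.
have cv1 : forall v, v \in A1 -> exists2 i, i < size D1 & v \in nth set0 (D1 ++ D2) i.
  by move=> v /cov1 [i hi vi]; exists i => //; rewrite n1.
have cv2 : forall v, v \in A2 -> exists2 i, i < size D2 &
    v \in nth set0 (D1 ++ D2) (size D1 + i).
  by move=> v /cov2 [i hi vi]; exists i => //; rewrite n2.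
split; rewrite ?size_cat.
- by rewrite addn_gt0 s1.
- move=> i; rewrite nth_cat; case: ifP => _.
    by apply: subset_trans (sub1 i) (subsetUl _ _).
  by apply: subset_trans (sub2 _) (subsetUr _ _).
- move=> v; rewrite inE => /orP [/cv1 [i hi vi]|/cv2 [i hi vi]].
    by exists i => //; apply: leq_trans hi (leq_addr _ _).
  by exists (size D1 + i) => //; rewrite ltn_add2l.
- move=> u v; rewrite !inE => /orP [u1|u2] /orP [v1|v2] e.
  + have [i [j [hij hj ui vj]]] := arc1 u v u1 v1 e.
    exists i, j; split => //; rewrite ?n1 //; last exact: leq_ltn_trans hij hj.
    exact: leq_trans hj (leq_addr _ _).
  + have [i hi ui] := cv1 u u1; have [j hj vj] := cv2 v v2.
    exists i, (size D1 + j); split => //; last by rewrite ltn_add2l.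
    exact: leq_trans (ltnW hi) (leq_addr _ _).
  + by move: (noback u v u2 v1); rewrite e.
  + have [i [j [hij hj ui vj]]] := arc2 u v u2 v2 e.
    exists (size D1 + i), (size D1 + j); split; rewrite ?n2 ?leq_add2l ?ltn_add2l //.
- move=> v i j k hij hjk hk.
  case: (ltnP k (size D1)) => hk1.
    have hj : j < size D1 by apply: leq_ltn_trans hjk hk1.
    have hi : i < size D1 by apply: leq_ltn_trans hij hj.
    rewrite !n1 //; exact: conv1.
  case: (ltnP i (size D1)) => hi1.
    rewrite n1 // => vi; rewrite -(subnKC hk1) n2 => vk.
    have := subsetP (sub1 i) v vi; have := subsetP (sub2 _) v vk.
    by move=> h2 h1; rewrite (disjointFr dis h1) in h2.
  have hj1 : size D1 <= j by apply: leq_trans hi1 hij.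
  rewrite -(subnKC hk1) -(subnKC hj1) -(subnKC hi1) !n2.
  apply: conv2; rewrite ?leq_sub2r //.
  by rewrite ltn_subLR // addnC.
Qed.

Fixpoint dec (V : finType) (t : cotree V) : seq {set V} :=
 match t with
 | CLeaf v => [:: [set v]]
 | CUnion l r => dec l ++ dec r
 | CSeries l r => if wt l + nv r <= wt r + nv l
     then [seq X :|: [set x in leaves r] | X <- dec l]
     else [seq X :|: [set x in leaves l] | X <- dec r]
 end.

Lemma bound_map (V : finType) (B : {set V}) (D : seq {set V}) m i :
  (forall i, #|nth set0 D i| <= m) -> #|nth set0 [seq X :|: B | X <- D] i| <= m + #|B|.
Proof.
move=> h; case: (ltnP i (size D)) => hi.
  rewrite nth_mapU //; apply: leq_trans (leq_card_setU _ _) _.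
  by rewrite leq_add2r.
by rewrite nth_default ?size_map // cards0.
Qed.

Lemma dec_ok (V : finType) (E : rel V) (t : cotree V) :
  uniq (leaves t) -> yields E t ->
  dpd_of E [set x in leaves t] (dec t) /\
  forall i, #|nth set0 (dec t) i| <= (wt t).+1.
Proof.
elim: t => [v|l IHl r IHr|l IHl r IHr] /=.
- move=> _ _; have -> : [set x in [:: v]] = [set v] by apply/setP => x; rewrite !inE.
  split; first exact: dpd_leaf.
  by case=> [|i] /=; rewrite ?cards1 ?nth_nil ?cards0.
- move=> u; move: (u); rewrite cat_uniq => /and3P [ul _ ur] /and3P [yl yr ya].
  have [D1 B1] := IHl ul yl; have [D2 B2] := IHr ur yr.
  rewrite setcat; split.
    apply: dpd_union => //; first exact: disj_cat.
    move=> x y; rewrite !inE => xr yl'.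
    by move/allP: ya => /(_ y yl') /allP /(_ x xr).
  move=> i; rewrite nth_cat; case: ifP => _.
    by apply: leq_trans (B1 _) _; rewrite ltnS leq_maxl.
  by apply: leq_trans (B2 _) _; rewrite ltnS leq_maxr.
- move=> u; move: (u); rewrite cat_uniq => /and3P [ul _ ur] /and3P [yl yr ya].
  have [D1 B1] := IHl ul yl; have [D2 B2] := IHr ur yr.
  rewrite setcat; case: ifP => c.
    split; first exact: dpd_series.
    move=> i; apply: leq_trans (bound_map _ i B1) _.
    rewrite card_leaves //; lia.
  rewrite setUC; split; first exact: dpd_series.
  move=> i; apply: leq_trans (bound_map _ i B2) _.
  rewrite card_leaves //; move/negbT: c; rewrite -ltnNge; lia.
Qed.


Lemma dpd_to_dtd (V : finType) (E : rel V) (D : seq {set V}) (x0 : V) :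
  is_dpath_dec E D ->
  exists (par : V -> option V) (root : V) (X W : V -> {set V}),
    is_dtree_dec E par root X W /\ dtd_width par X W <= dpd_width D.
Proof.
move=> [cov arc conv].
pose f v := find (fun S : {set V} => v \in S) D.
have fs : forall v, f v < size D.
  move=> v; rewrite /f -has_find; have [i hi vi] := cov v.
  by apply/hasP; exists (nth set0 D i) => //; exact: mem_nth.
have fin : forall v, v \in nth set0 D (f v).
  move=> v; apply: (@nth_find _ set0 (fun S : {set V} => v \in S) D).
  by rewrite has_find; exact: fs.
have fmin : forall v i, v \in nth set0 D i -> f v <= i.
  move=> v i vi; rewrite leqNgt; apply/negP => h.
  by have := before_find set0 h; rewrite vi.
pose L := sort (fun a b => f a <= f b) (enum V).
have Lu : uniq L by rewrite sort_uniq enum_uniq.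
have Lm : forall v, v \in L by move=> v; rewrite mem_sort mem_enum.
have Ls : sorted (fun a b => f a <= f b) L.
  by apply: sort_sorted => a b; exact: leq_total.
pose idx v := index v L.
have ids : forall v, idx v < size L by move=> v; rewrite index_mem.
have nthi : forall v, nth x0 L (idx v) = v by move=> v; rewrite nth_index.
have idn : forall j, j < size L -> idx (nth x0 L j) = j.
  by move=> j hj; rewrite /idx index_uniq.
have mono : forall a b, idx a <= idx b -> f a <= f b.
  move=> a b h; rewrite -(nthi a) -(nthi b).
  have T : transitive (fun a b : V => f a <= f b) by move=> y x z; apply: leq_trans.
  have Rf : reflexive (fun a b : V => f a <= f b) by move=> y; exact: leqnn.
  by apply: (sorted_leq_nth T Rf x0 Ls) => //; rewrite inE; exact: ids.
pose par v := if idx v is j.+1 then Some (nth x0 L j) else None.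
pose root := nth x0 L 0.
pose X v := nth set0 D (f v) :&: [set u | idx u < idx v].
pose W (v : V) : {set V} := [set v].
have itp : forall n r, iter n (fun o => obind par o) (Some r) =
    if n <= idx r then Some (nth x0 L (idx r - n)) else None.
  move=> n r; elim: n => [|n IH]; first by rewrite /= subn0 nthi.
  rewrite iterS IH; case: (leqP n (idx r)) => h.
    have hs : idx r - n < size L by apply: leq_ltn_trans (leq_subr _ _) (ids r).
    rewrite /= /par idn //.
    case: (ltnP n (idx r)) => h'.
      by have -> : idx r - n = (idx r - n.+1).+1 by lia.
    by have -> : idx r - n = 0 by lia.
  by rewrite /= ltnNge ltnW.
have tleE : forall v r, tle par v r <-> idx v <= idx r.
  move=> v r; split.
    case=> n; rewrite /iter_par itp; case: ifP => // h [<-].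
    rewrite idn; first exact: leq_subr.
    by apply: leq_ltn_trans (leq_subr _ _) (ids r).
  move=> h; exists (idx r - idx v); rewrite /iter_par itp leq_subr subKn //.
  by rewrite nthi.
have sL : 0 < size L := leq_ltn_trans (leq0n _) (ids x0).
exists par, root, X, W; split.
  split.
  - split; first by rewrite /par /root idn.
    by move=> v; exists (idx v); rewrite /iter_par itp leqnn subnn.
  - by move=> r; apply/set0Pn; exists r; rewrite inE.
  - by move=> r1 r2 h; rewrite disjoints1 in_set1.
  - by move=> x; exists x; rewrite inE.
  - move=> u v pv x p pp pa [r tr xr] _ y yin; right.
    have Sx : idx v <= idx x.
      by rewrite inE in xr; move/eqP: xr => ->; apply/tleE.
    have step : forall a c, E a c -> idx v <= idx a -> ~~ (c \in X v) -> idx v <= idx c.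
      move=> a c eac ha cX; rewrite leqNgt; apply/negP => hc.
      have [i [j [hij hj ai cj]]] := arc a c eac.
      have fc : f c <= f v := mono c v (ltnW hc).
      have fv : f v <= f a := mono v a ha.
      have fa : f a <= i := fmin a i ai.
      have cfv : c \in nth set0 D (f v).
        exact: (conv c (f c) (f v) j fc (leq_trans fv (leq_trans fa hij)) hj (fin c) cj).
      by move/negP: cX; apply; rewrite /X !inE cfv hc.
    have h := @path_stay V E (fun a => idx v <= idx a) (fun z => z \in X v) x p pp pa Sx step y yin.
    by exists y; [apply/tleE | rewrite inE].
rewrite /dtd_width /dpd_width leq_sub2r //; apply/bigmax_leqP => v _.
apply: (@leq_trans #|nth set0 D (f v)|).
  apply: subset_leq_card; rewrite /dtd_bag !subUset; apply/andP; split; first apply/andP; first split.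
  - by apply/subsetP => y; rewrite inE => /eqP ->; exact: fin v.
  - by case: (par v) => [?|]; [exact: subsetIl | exact: sub0set].
  - apply/bigcupsP => c /eqP pc.
    have ic : idx c = (idx v).+1.
      move: pc; rewrite /par; case e: (idx c) => [|j] //= [hj].
      have hjs : j < size L by have := ids c; rewrite e => /ltnW.
      by rewrite -hj idn.
    apply/subsetP => y; rewrite /X !inE => /andP [yc iy].
    have fy : f y <= f v by apply: mono; rewrite -ltnS -ic.
    have fvc : f v <= f c by apply: mono; rewrite ic.
    exact: (conv y (f y) (f v) (f c) fy fvc (fs c) (fin y) yc).
by apply: (@leq_bigmax_seq _ D xpredT (fun X => #|X|)) => //; exact: mem_nth.
Qed.


Fixpoint leaf0 (V : Type) (t : cotree V) : V :=
  match t with CLeaf v => v | CUnion l _ => leaf0 l | CSeries l _ => leaf0 l end.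

Theorem theorem5p7 :
  exists (P : tprog) (c : nat),
    forall (V : finType) (E : rel V) (t : cotree V),
      is_bin_exdicotree E t ->
      [/\ is_dpw E (run_pw P t),
          is_dtw E (run_tw P t) &
          run_cost P t <= c * #|V|].
Proof.
exists P, 14 => V E t [Hu Hc Hy].
have Aset : [set x in leaves t] = setT by apply/setP => x; rewrite !inE Hc.
have [b Hb] := haven_tree Hu Hy; rewrite Aset in Hb.
have [Dok Db] := dec_ok Hu Hy; rewrite Aset in Dok.
have isD : is_dpath_dec E (dec t).
  case: Dok => _ _ cov arc conv; split => //.
    by move=> v; apply: cov; rewrite inE.
  by move=> u v; apply: arc; rewrite inE.
have [pw tw] := run_stateE t.
rewrite /run_pw /run_tw /= tw.
have lbD : forall s, is_dpath_dec E s -> wt t <= dpd_width s.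
  move=> s hs; have [i hi hk] := dpd_lb hs Hb (ltn0Sn _).
  rewrite /dpd_width; apply: (@leq_trans ((wt t).+1 - 1)); first by rewrite subn1.
  apply: leq_sub2r; apply: leq_trans hk _.
  by apply: (@leq_bigmax_seq _ s xpredT (fun X => #|X|)) => //; exact: mem_nth.
have ubD : dpd_width (dec t) <= wt t.
  rewrite /dpd_width leq_subLR add1n; apply/bigmax_leqP_seq => X XD _.
  by rewrite -(nth_index set0 XD); exact: Db.
have lbT : forall (R : finType) (par : R -> option R) (root : R) (X W : R -> {set V}),
    is_dtree_dec E par root X W -> wt t <= dtd_width par X W.
  move=> R par root X W h; have [r hr] := dtd_lb h Hb (ltn0Sn _).
  rewrite /dtd_width; apply: (@leq_trans ((wt t).+1 - 1)); first by rewrite subn1.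
  apply: leq_sub2r; apply: leq_trans hr _.
  exact: (@leq_bigmax R (fun r => #|dtd_bag par X W r|) r).
split.
- split; last exact: lbD.
  by exists (dec t); split => //; apply/eqP; rewrite eqn_leq ubD lbD.
- have [par [root [X [W [hT hw]]]]] := dpd_to_dtd (leaf0 t) isD.
  split; last by move=> R par' root' X' W' h; exact: lbT h.
  exists V, par, root, X, W; split => //.
  by apply/eqP; rewrite eqn_leq (leq_trans hw ubD) (lbT _ _ _ _ _ hT).
- rewrite /run_cost.
  have -> : asize (pout_pw P) = 1 by [].
  have := cost_bound t.
  have nvV : nv t <= #|V| by rewrite /nv -(card_uniqP Hu); exact: max_card.
  move=> h; apply: leq_trans (leq_trans _ h) _; first by rewrite -addnA leq_add2l.
  exact: leq_mul.
Qed.
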